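(* Let $n=2k$ with $k\ge 2$. Then $\{d_i : i=1,\ldots,n\}\cup\{a_{i'} : i'=1,\ldots,k\}$ is a strong resolving set of $S_n$.
   Context: For $n\ge 3$, $S_n$ is the graph with vertex set $\{a_i,b_i,c_i,d_i : 1\le i\le n\}$ and edge set $\{a_ia_{i+1}, b_ib_{i+1}, c_ic_{i+1}, d_id_{i+1}, a_{i+1}b_i, a_ib_i, b_ic_i, c_id_i : 1\le i\le n\}$, indices taken modulo $n$. $d$ is the graph distance. A vertex $w$ strongly resolves distinct vertices $u,v$ if $d(v,w)=d(v,u)+d(u,w)$ or $d(u,w)=d(u,v)+d(v,w)$. A set $S$ is a strong resolving set if every two distinct vertices are strongly resolved by some vertex of $S$. *)

(* Defs.v *)
From mathcomp Require Import all_boot.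
Set Implicit Arguments. Unset Strict Implicit. Unset Printing Implicit Defensive.

Section Dist.
Variables (T : finType) (adj : rel T).

Fixpoint ball (m : nat) (u : T) : {set T} :=
  match m with
  | 0 => [set u]
  | m'.+1 => ball m' u :|: [set y | [exists x in ball m' u, adj x y]]
  end.

(* graph distance: least m with v in ball m u (a shortest path length);
   any shortest path has length < #|T|; value #|T| if v unreachable. *)
Definition gdist (u v : T) : nat := find (fun m => v \in ball m u) (iota 0 #|T|).

Definition strongly_resolves (w u v : T) : bool :=
  (gdist v w == gdist v u + gdist u w) || (gdist u w == gdist u v + gdist v w).

Definition strong_resolving_set (S : {set T}) : Prop :=
  forall u v : T, u != v -> exists2 w, w \in S & strongly_resolves w u v.
End Dist.

(* Vertex (c, i) with c : 'I_4 encodes a_{i+1}, b_{i+1}, c_{i+1}, d_{i+1}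
   for c = 0,1,2,3 respectively; i : 'I_n is the 0-based index. *)
Definition Svert (n : nat) := ('I_4 * 'I_n)%type.

Definition Sedge0 (n : nat) (x y : Svert n) : bool :=
  [|| (x.1 == y.1) && (y.2 == (x.2 + 1) %% n :> nat)            (* a_ia_{i+1}, b_ib_{i+1}, c_ic_{i+1}, d_id_{i+1} *)
    , [&& x.1 == 0 :> nat, y.1 == 1 :> nat & x.2 == (y.2 + 1) %% n :> nat] (* a_{i+1} b_i *)
    , [&& x.1 == 0 :> nat, y.1 == 1 :> nat & x.2 == y.2]      (* a_i b_i *)
    , [&& x.1 == 1 :> nat, y.1 == 2 :> nat & x.2 == y.2]      (* b_i c_i *)
    | [&& x.1 == 2 :> nat, y.1 == 3 :> nat & x.2 == y.2] ].   (* c_i d_i *)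

Definition Sadj (n : nat) : rel (Svert n) := fun x y => Sedge0 x y || Sedge0 y x.

Definition Sset (n k : nat) : {set Svert n} :=
  [set x : Svert n | (x.1 == 3 :> nat) || ((x.1 == 0 :> nat) && (x.2 < k))].

(* Main.v *)
Require Import Defs.
From mathcomp Require Import all_boot zify.
Set Implicit Arguments. Unset Strict Implicit.


Definition D (n p q : nat) := minn (p - q + (q - p)) (2*n - (p - q + (q - p))).

Definition wp1 n q q1 := (q+1 < 2*n /\ q1 = q+1) \/ (q+1 = 2*n /\ q1 = 0).
Definition wm1 n q q1 := (0 < q /\ q1 = q-1) \/ (q = 0 /\ q1 = 2*n-1).
Definition wp2 n q q1 := (q+2 < 2*n /\ q1 = q+2) \/ (2*n <= q+2 /\ q1 = q+2-2*n).
Definition wm2 n q q1 := (2 <= q /\ q1 = q-2) \/ (q < 2 /\ q1 = q+2*n-2).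

Lemma Dspec n p q : p < 2*n -> q < 2*n ->
  (p <= q /\ q <= p + n /\ D n p q + p = q) \/ (p <= q /\ p + n <= q /\ D n p q + q = p + 2*n) \/
  (q <= p /\ p <= q + n /\ D n p q + q = p) \/ (q <= p /\ q + n <= p /\ D n p q + p = q + 2*n).
Proof.
move=> hp hq; rewrite /D; case: (leqP p q) => h.
- case: (leqP (q - p) n) => h2; lia.
- case: (leqP (p - q) n) => h2; lia.
Qed.

Ltac dsp n p q := let H := fresh "H" in
  have H := @Dspec n p q ltac:(lia) ltac:(lia);
  destruct H as [H|[H|[H|H]]].

Lemma Dstep1 n p q q1 : p < 2*n -> q < 2*n -> wp1 n q q1 ->
  D n p q1 <= D n p q + 1 /\ D n p q <= D n p q1 + 1.
Proof. rewrite /wp1 => hp hq [[h ->]|[h ->]]; dsp n p q; dsp n p (q+1) || dsp n p 0; lia. Qed.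

Lemma Dpar n p q : p < 2*n -> q < 2*n -> exists m, D n p q + p + q = 2*m.
Proof.
move=> hp hq; dsp n p q.
- exists q; lia.
- exists (n + p); lia.
- exists p; lia.
- exists (n + q); lia.
Qed.

Lemma Dle n p q : p < 2*n -> q < 2*n -> D n p q <= n.
Proof. move=> hp hq; dsp n p q; lia. Qed.

Lemma D0 n p q : p < 2*n -> q < 2*n -> D n p q = 0 -> p = q.
Proof. move=> hp hq; dsp n p q; lia. Qed.

Lemma Dself n p : D n p p = 0.
Proof. rewrite /D; lia. Qed.

Lemma Dstep2 n p q q1 : p < 2*n -> q < 2*n -> wp2 n q q1 ->
  D n p q1 <= D n p q + 2 /\ D n p q <= D n p q1 + 2.
Proof. rewrite /wp2 => hp hq [[h ->]|[h ->]]; dsp n p q.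
all: first [dsp n p (q+2) | dsp n p (q+2-2*n)]; lia. Qed.

Lemma Ddesc1 n p q q1 q2 : p < 2*n -> q < 2*n -> wp1 n q q1 -> wm1 n q q2 -> 0 < D n p q ->
  D n p q1 + 1 = D n p q \/ D n p q2 + 1 = D n p q.
Proof. rewrite /wp1 /wm1 => hp hq [[h ->]|[h ->]] [[h' ->]|[h' ->]].
- dsp n p q; dsp n p (q+1); dsp n p (q-1); lia.
- dsp n p q; dsp n p (q+1); dsp n p (2*n-1); lia.
- dsp n p q; dsp n p 0; dsp n p (q-1); lia.
- dsp n p q; dsp n p 0; dsp n p (2*n-1); lia.
Qed.

Lemma Ddesc2 n p q q1 q2 : 1 <= n -> p < 2*n -> q < 2*n -> wp2 n q q1 -> wm2 n q q2 -> 2 <= D n p q ->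
  D n p q1 + 2 = D n p q \/ D n p q2 + 2 = D n p q.
Proof. rewrite /wp2 /wm2 => hn hp hq [[h ->]|[h ->]] [[h' ->]|[h' ->]].
- dsp n p q; dsp n p (q+2); dsp n p (q-2); lia.
- dsp n p q; dsp n p (q+2); dsp n p (q+2*n-2); lia.
- dsp n p q; dsp n p (q+2-2*n); dsp n p (q-2); lia.
- dsp n p q; dsp n p (q+2-2*n); dsp n p (q+2*n-2); lia.
Qed.


Definition pos (c i : nat) := 2*i + minn c 1.
Definition F (n c i c' j : nat) : nat :=
  (D n (pos c i) (pos c' j) + 1) %/ 2 + ((c-c')+(c'-c)) - ((minn c 1 - minn c' 1) + (minn c' 1 - minn c 1)).

Definition sc (n i j : nat) : bool := ((i+1 < n) && (j == i+1)) || ((i+1 == n) && (j == 0)).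

Definition Eb (n c i c' j : nat) : bool :=
  [|| (c == c') && sc n i j
    , [&& c == 0, c' == 1 & sc n j i]
    , [&& c == 0, c' == 1 & i == j]
    , [&& c == 1, c' == 2 & i == j]
    | [&& c == 2, c' == 3 & i == j] ].

Lemma pos_lt n c i : i < n -> pos c i < 2*n.
Proof. rewrite /pos; lia. Qed.

Lemma lipF n c i c1 j1 c2 j2 : 4 <= n -> c < 4 -> c1 < 4 -> c2 < 4 -> i < n -> j1 < n -> j2 < n ->
  Eb n c1 j1 c2 j2 -> F n c i c2 j2 <= F n c i c1 j1 + 1 /\ F n c i c1 j1 <= F n c i c2 j2 + 1.
Proof.
move=> hn hc hc1 hc2 hi hj1 hj2 hE.
have hp := pos_lt c hi; have hq1 := pos_lt c1 hj1; have hq2 := pos_lt c2 hj2.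
have [m1 e1] := Dpar hp hq1; have [m2 e2] := Dpar hp hq2.
move: hE; rewrite /Eb /sc.
case/orP=> [|/orP [|/orP [|/orP []]]].
- move=> h.
  have hw : wp2 n (pos c1 j1) (pos c2 j2) by rewrite /wp2 /pos; lia.
  have := Dstep2 hp hq1 hw; move: hw e1 e2; rewrite /wp2 /F => hw e1 e2.
  have -> : c2 = c1 by lia.
  lia.
- move=> h.
  have hw : wp1 n (pos c2 j2) (pos c1 j1) by rewrite /wp1 /pos; lia.
  have := Dstep1 hp hq2 hw; move: hw e1 e2; rewrite /wp1 /F => hw e1 e2.
  have h1 : c1 = 0 by lia. have h2 : c2 = 1 by lia. subst c1 c2.
  lia.
- move=> h.
  have hw : wp1 n (pos c1 j1) (pos c2 j2) by rewrite /wp1 /pos; lia.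
  have := Dstep1 hp hq1 hw; move: hw e1 e2; rewrite /wp1 /F => hw e1 e2.
  have h1 : c1 = 0 by lia. have h2 : c2 = 1 by lia. subst c1 c2.
  lia.
- move=> h.
  have hw : pos c1 j1 = pos c2 j2 by rewrite /pos; lia.
  have h1 : c1 = 1 by lia. have h2 : c2 = 2 by lia. subst c1 c2.
  rewrite /F hw; lia.
- move=> h.
  have hw : pos c1 j1 = pos c2 j2 by rewrite /pos; lia.
  have h1 : c1 = 2 by lia. have h2 : c2 = 3 by lia. subst c1 c2.
  rewrite /F hw; lia.
Qed.

Lemma Fself n c i : F n c i c i = 0.
Proof. rewrite /F Dself; lia. Qed.

Lemma F0 n c i c' j : i < n -> j < n -> F n c i c' j = 0 -> c = c' /\ i = j.
Proof.
move=> hi hj; have hp := pos_lt c hi; have hq := pos_lt c' hj.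
case: (posnP (D n (pos c i) (pos c' j))) => hD.
- have := D0 hp hq hD; rewrite /F hD /pos; lia.
- rewrite /F; lia.
Qed.

Lemma Flt n c i c' j : 4 <= n -> c < 4 -> c' < 4 -> i < n -> j < n -> F n c i c' j < 4 * n.
Proof.
move=> hn hc hc' hi hj; have hp := pos_lt c hi; have hq := pos_lt c' hj.
have := Dle hp hq; rewrite /F; lia.
Qed.

Lemma Eb_same n c i j : sc n i j -> Eb n c i c j.
Proof. by rewrite /Eb eqxx => ->. Qed.
Lemma Eb_ab n i j : sc n j i -> Eb n 0 i 1 j.
Proof. by rewrite /Eb => ->. Qed.
Lemma Eb_ab0 n i : Eb n 0 i 1 i.
Proof. by rewrite /Eb !eqxx ?orbT. Qed.

Lemma L1 n c i c' j : 2 <= c' -> c < c' -> c' < 4 -> F n c i (c'-1) j + 1 = F n c i c' j.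
Proof. move=> h1 h2 h3; rewrite /F; have -> : pos (c'-1) j = pos c' j by rewrite /pos; lia. lia. Qed.

Lemma L2 n c i c' j : 1 <= c' -> c' < c -> c < 4 -> F n c i (c'+1) j + 1 = F n c i c' j.
Proof. move=> h1 h2 h3; rewrite /F; have -> : pos (c'+1) j = pos c' j by rewrite /pos; lia. lia. Qed.

Lemma L3 n c i j j2 m : 1 <= c -> c < 4 -> D n (pos c i) (pos 0 j) = 2*m+1 ->
  D n (pos c i) (pos 1 j2) + 1 = D n (pos c i) (pos 0 j) -> F n c i 1 j2 + 1 = F n c i 0 j.
Proof. move=> h1 h2 h3 h4; rewrite /F; lia. Qed.

Lemma L4 n c i j j2 : 2 <= D n (pos c i) (pos c j) ->
  D n (pos c i) (pos c j2) + 2 = D n (pos c i) (pos c j) -> F n c i c j2 + 1 = F n c i c j.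
Proof. move=> h1 h2; rewrite /F; lia. Qed.

Lemma L5a n i j j2 : D n (pos 0 i) (pos 1 j) = 1 ->
  D n (pos 0 i) (pos 0 j2) + 1 = D n (pos 0 i) (pos 1 j) -> F n 0 i 0 j2 + 1 = F n 0 i 1 j.
Proof. move=> h1 h2; rewrite /F; lia. Qed.

Lemma L5b n i j j2 : 2 <= D n (pos 0 i) (pos 1 j) ->
  D n (pos 0 i) (pos 1 j2) + 2 = D n (pos 0 i) (pos 1 j) -> F n 0 i 1 j2 + 1 = F n 0 i 1 j.
Proof. move=> h1 h2; rewrite /F; lia. Qed.

Lemma descF n c i c' j : 4 <= n -> c < 4 -> c' < 4 -> i < n -> j < n -> (c != c') || (i != j) ->
  exists c2 j2, [/\ c2 < 4, j2 < n, Eb n c2 j2 c' j || Eb n c' j c2 j2 & F n c i c2 j2 + 1 = F n c i c' j].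
Proof.
move=> hn hc hc' hi hj hne.
have [jp hjp] : exists jp, (j+1 < n /\ jp = j+1) \/ (j+1 = n /\ jp = 0).
  case: (ltngtP (j+1) n) => h; [exists (j+1)|lia|exists 0]; lia.
have [jm hjm] : exists jm, (0 < j /\ jm = j-1) \/ (j = 0 /\ jm = n-1).
  case: (posnP j) => h; [exists (n-1)|exists (j-1)]; lia.
have hjp' : jp < n by clear -hjp hj; lia.
have hjm' : jm < n by clear -hjm hj hn; lia.
have hp := pos_lt c hi; have hq := pos_lt c' hj.
have [m1 e1] := Dpar hp hq.
have hD0 : D n (pos c i) (pos c' j) = 0 -> i = j /\ minn c 1 = minn c' 1.
  move=> h; have := D0 hp hq h; rewrite /pos; clear -hc hc'; lia.
have hn1 : 1 <= n by clear -hn; lia.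
case: (boolP ((2 <= c') && (c < c'))) => [/andP [h1 h2]|h1].
  exists (c'-1), j; split; [lia|lia| |exact: L1].
  have : (c' == 2) || (c' == 3) by clear -h1 hc'; lia.
  by case/orP => /eqP ->; rewrite /Eb !eqxx ?orbT.
case: (boolP ((1 <= c') && (c' < c))) => [/andP [h3 h4]|h3].
  exists (c'+1), j; split; [lia|lia| |exact: L2].
  have : (c' == 1) || (c' == 2) by clear -h3 h4 hc; lia.
  by case/orP => /eqP ->; rewrite /Eb !eqxx ?orbT.
case: (boolP ((c' == 0) && (1 <= c))) => [/andP [/eqP h5 h6]|h5].
  subst c'.
  have w1 : wp1 n (pos 0 j) (pos 1 j) by rewrite /wp1 /pos; clear -hj; lia.
  have w2 : wm1 n (pos 0 j) (pos 1 jm) by rewrite /wm1 /pos; clear -hjm hj; lia.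
  have [m hm] : exists m, D n (pos c i) (pos 0 j) = 2*m+1.
    exists (m1 - i - j - 1); move: e1; rewrite /pos; clear -h6 hc; lia.
  have hDp : 0 < D n (pos c i) (pos 0 j) by rewrite hm; lia.
  case: (Ddesc1 hp hq w1 w2 hDp) => hd.
  - exists 1, j; split; [lia|lia| |exact: L3 hm hd].
    by apply/orP; right; apply: Eb_ab0.
  - exists 1, jm; split; [lia|lia| |exact: L3 hm hd].
    apply/orP; right; apply: Eb_ab; rewrite /sc; clear -hjm hj; lia.
case: (boolP (c == c')) => [/eqP h7|h7].
  subst c'.
  have w1 : wp2 n (pos c j) (pos c jp) by rewrite /wp2 /pos; clear -hjp hj hc; lia.
  have w2 : wm2 n (pos c j) (pos c jm) by rewrite /wm2 /pos; clear -hjm hj hc; lia.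
  have hDp : 2 <= D n (pos c i) (pos c j).
    move: hD0 e1 hne; rewrite /pos; clear; lia.
  case: (Ddesc2 hn1 hp hq w1 w2 hDp) => hd.
  - exists c, jp; split; [lia|lia| |exact: L4 hDp hd].
    apply/orP; right; apply: Eb_same; rewrite /sc; clear -hjp hj; lia.
  - exists c, jm; split; [lia|lia| |exact: L4 hDp hd].
    apply/orP; left; apply: Eb_same; rewrite /sc; clear -hjm hj; lia.
have h8 : c = 0 by clear -h1 h3 h5 h7 hc hc'; lia.
have h9 : c' = 1 by clear -h1 h3 h5 h7 hc hc'; lia.
subst c c'.
case: (boolP (D n (pos 0 i) (pos 1 j) == 1)) => [/eqP h10|h10].
  have w1 : wp1 n (pos 1 j) (pos 0 jp) by rewrite /wp1 /pos; clear -hjp hj; lia.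
  have w2 : wm1 n (pos 1 j) (pos 0 j) by rewrite /wm1 /pos; clear; lia.
  case: (Ddesc1 hp hq w1 w2 ltac:(rewrite h10; lia)) => hd.
  - exists 0, jp; split; [lia|lia| |exact: L5a h10 hd].
    apply/orP; left; apply: Eb_ab; rewrite /sc; clear -hjp hj; lia.
  - exists 0, j; split; [lia|lia| |exact: L5a h10 hd].
    by apply/orP; left; apply: Eb_ab0.
have w1 : wp2 n (pos 1 j) (pos 1 jp) by rewrite /wp2 /pos; clear -hjp hj; lia.
have w2 : wm2 n (pos 1 j) (pos 1 jm) by rewrite /wm2 /pos; clear -hjm hj; lia.
have hDp : 2 <= D n (pos 0 i) (pos 1 j).
  move: e1 h10; rewrite /pos; clear; lia.
case: (Ddesc2 hn1 hp hq w1 w2 hDp) => hd.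
- exists 1, jp; split; [lia|lia| |exact: L5b hDp hd].
  apply/orP; right; apply: Eb_same; rewrite /sc; clear -hjp hj; lia.
- exists 1, jm; split; [lia|lia| |exact: L5b hDp hd].
  apply/orP; left; apply: Eb_same; rewrite /sc; clear -hjm hj; lia.
Qed.


Lemma R1 n c i c' j : 1 <= c -> c' <= c -> c < 4 -> c' < 4 ->
   F n c' j 3 i = F n c' j c i + F n c i 3 i.
Proof.
move=> h1 h2 hc hc'.
rewrite /F; have -> : pos 3 i = pos c i by rewrite /pos; clear -h1; lia.
rewrite Dself; move: (D n _ _) => d.
case: c h1 h2 hc => [//|[|[|[|//]]]] _; case: c' hc' => [|[|[|[|//]]]] _ //= _ _; lia.
Qed.

Lemma R3 k i j : 2 <= k -> i < 2*k -> j < 2*k -> k <= i -> k <= j ->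
  F (2*k) 0 j 0 (j - k) = F (2*k) 0 j 0 i + F (2*k) 0 i 0 (j - k).
Proof.
move=> hk hi hj hik hjk.
rewrite /F /pos /=.
have hA : 2 * j < 2 * (2*k) by lia.
have hB : 2 * i < 2 * (2*k) by lia.
have hC : 2 * (j - k) < 2 * (2*k) by lia.
rewrite !addn0.
dsp (2*k) (2*j) (2*(j-k)); dsp (2*k) (2*j) (2*i); dsp (2*k) (2*i) (2*(j-k)); lia.
Qed.

Lemma R2 n c i c' j : c < c' -> c < 4 -> c' < 4 ->
   F n c i 3 j = F n c i c' j + F n c' j 3 j.
Proof.
move=> h2 hc hc'.
rewrite /F; have -> : pos 3 j = pos c' j by rewrite /pos; clear -h2; lia.
rewrite Dself; move: (D n _ _) => d.
case: c h2 hc => [|[|[|[|//]]]]; case: c' hc' => [|[|[|[|//]]]] //= _ _ _; lia.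
Qed.

Lemma resF k c i c' j : 2 <= k -> c < 4 -> c' < 4 -> i < 2*k -> j < 2*k ->
  exists c2 j2, [/\ c2 < 4, j2 < 2*k, (c2 == 3) || ((c2 == 0) && (j2 < k)) &
   (F (2*k) c' j c2 j2 == F (2*k) c' j c i + F (2*k) c i c2 j2) ||
   (F (2*k) c i c2 j2 == F (2*k) c i c' j + F (2*k) c' j c2 j2)].
Proof.
move=> hk hc hc' hi hj.
case: (boolP ((1 <= c) && (c' <= c))) => [/andP [h1 h2]|h1].
  exists 3, i; split; [done|done|done|].
  by rewrite (R1 (2*k) i j h1 h2 hc hc') eqxx.
case: (boolP (c < c')) => [h2|h2].
  exists 3, j; split; [done|done|done|].
  by rewrite (R2 (2*k) i j h2 hc hc') eqxx orbT.
have h0 : c = 0 by clear -h1 h2; lia.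
have h0' : c' = 0 by clear -h1 h2 h0; lia.
subst c c'.
case: (ltnP i k) => hik.
  exists 0, i; split; [done|clear -hi; lia|done|].
  by rewrite Fself addn0 eqxx.
case: (ltnP j k) => hjk.
  exists 0, j; split; [done|clear -hj; lia|done|].
  by rewrite Fself addn0 eqxx orbT.
have hjk' : j - k < k by clear -hj; lia.
exists 0, (j - k); split; [done|clear -hj; lia|done|].
by rewrite (R3 hk hi hj hik hjk) eqxx.
Qed.


Lemma ball_gen (T : finType) (adj : rel T) (g : T -> nat) (u : T) :
  (forall v, g v = 0 <-> v = u) ->
  (forall x y, adj x y -> g y <= g x + 1) ->
  (forall v, v <> u -> exists2 w, adj w v & g w + 1 = g v) ->
  forall m v, (v \in ball adj m u) = (g v <= m).
Proof.
move=> H0 Hl Hd; elim=> [|m IH] v /=.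
  rewrite in_set1; apply/eqP/idP => [->|h].
  - by rewrite (proj2 (H0 u) erefl).
  - by apply/H0; lia.
rewrite in_setU in_set IH; apply/idP/idP.
- case/orP => [h|/existsP [x /andP [hx hxv]]]; first lia.
  rewrite IH in hx; have := Hl _ _ hxv; lia.
- move=> h; case: (leqP (g v) m) => h2; first by [].
  have hv : v <> u by move=> e; move: (proj2 (H0 v) e); lia.
  case: (Hd v hv) => w hw e.
  apply/orP; right; apply/existsP; exists w; rewrite IH hw andbT; lia.
Qed.

Lemma find_le N a x : a <= x < a + N -> find (fun m => x <= m) (iota a N) = x - a.
Proof.
elim: N a => [|N IH] a h; first lia.
rewrite /= ; case: (leqP x a) => h2; first lia.
rewrite IH; lia.
Qed.

Lemma gdist_gen (T : finType) (adj : rel T) (g : T -> nat) (u v : T) :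
  (forall v, g v = 0 <-> v = u) ->
  (forall x y, adj x y -> g y <= g x + 1) ->
  (forall v, v <> u -> exists2 w, adj w v & g w + 1 = g v) ->
  g v < #|T| -> gdist adj u v = g v.
Proof.
move=> H0 Hl Hd hlt; rewrite /gdist.
rewrite (eq_find (a2 := fun m => g v <= m)); last by move=> m; rewrite (ball_gen H0 Hl Hd).
rewrite find_le ?subn0 //; lia.
Qed.

Lemma modS_eq (n i j : nat) : i < n -> (j == (i+1) %% n) = sc n i j.
Proof.
move=> hi; rewrite /sc; case: (ltngtP (i+1) n) => h.
- by rewrite modn_small //; lia.
- lia.
- by rewrite h modnn; lia.
Qed.

Lemma Sedge0E n (x y : Svert n) :
  Sedge0 x y = Eb n x.1 x.2 y.1 y.2.
Proof.
case: x => [[c hc] [i hi]]; case: y => [[c' hc'] [j hj]].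
by rewrite /Sedge0 /Eb /= modS_eq // modS_eq.
Qed.

Definition f n (u v : Svert n) := F n u.1 u.2 v.1 v.2.

Lemma gdistE n (u v : Svert n) : 4 <= n -> gdist (@Sadj n) u v = f u v.
Proof.
move=> hn; apply: gdist_gen.
- move=> w; split.
  + rewrite /f => h; have [e1 e2] := F0 (ltn_ord u.2) (ltn_ord w.2) h.
    case: u w e1 e2 {h} => [c i] [c' j] /= e1 e2.
    by congr pair; apply: val_inj.
  + by move=> ->; rewrite /f Fself.
- move=> x y; rewrite /Sadj !Sedge0E => /orP [] h.
  + by case: (lipF (c := u.1) (i := u.2) hn (ltn_ord _) (ltn_ord _) (ltn_ord _) (ltn_ord _) (ltn_ord _) (ltn_ord _) h).
  + by case: (lipF (c := u.1) (i := u.2) hn (ltn_ord _) (ltn_ord _) (ltn_ord _) (ltn_ord _) (ltn_ord _) (ltn_ord _) h).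
- move=> w hw.
  have hne : (u.1 != w.1 :> nat) || (u.2 != w.2 :> nat).
    case: u w hw => [c i] [c' j] /= hw.
    rewrite -negb_and; apply/negP => /andP [/eqP e1 /eqP e2]; apply: hw.
    by congr pair; apply: val_inj.
  have [c2 [j2 [h1 h2 h3 h4]]] := descF hn (ltn_ord u.1) (ltn_ord w.1) (ltn_ord u.2) (ltn_ord w.2) hne.
  exists (Ordinal h1, Ordinal h2); last by [].
  by rewrite /Sadj !Sedge0E.
- rewrite card_prod !card_ord /f.
  exact: Flt hn (ltn_ord _) (ltn_ord _) (ltn_ord _) (ltn_ord _).
Qed.

Theorem lemma3p12 (k : nat) (hk : 2 <= k) :
  strong_resolving_set (@Sadj (2 * k)) (Sset (2 * k) k).
Proof.
move=> u v huv.
have hn : 4 <= 2 * k by lia.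
have [c2 [j2 [h1 h2 h3 h4]]] := resF hk (ltn_ord u.1) (ltn_ord v.1) (ltn_ord u.2) (ltn_ord v.2).
exists (Ordinal h1, Ordinal h2).
  by rewrite /Sset inE /=.
by rewrite /strongly_resolves !gdistE.
Qed.
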